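(* Let $T$ be a line trigraph that contains no odd prism, and let $H$ be a bipartite graph such that $L(H)$ is the full realization of $T$. Then $H$ has no (not necessarily induced) subgraph isomorphic to an even theta, and $H$ is series-parallel, i.e. $H$ has no $K_4$-minor.
   Context: A trigraph $T$ consists of a finite set $V(T)$ and a map $\theta:\binom{V(T)}{2}\to\{-1,0,1\}$; distinct $u,v$ are strongly adjacent if $\theta(uv)=1$, strongly antiadjacent if $\theta(uv)=-1$, semiadjacent if $\theta(uv)=0$, adjacent if $\theta(uv)\in\{0,1\}$, antiadjacent if $\theta(uv)\in\{0,-1\}$. The full realization of $T$ is the graph on $V(T)$ whose edges are the adjacent pairs. A clique (strong clique) is a set of pairwise adjacent (strongly adjacent) vertices. $T$ is a line trigraph if its full realization is the line graph of a bipartite graph and every clique of size at least $3$ in $T$ is a strong clique. A prism in $T$ is an induced subtrigraph whose full realization consists of two vertex-disjoint triangles $\{a_1,a_2,a_3\}$, $\{b_1,b_2,b_3\}$ and three vertex-disjoint induced paths $P_i$ from $a_i$ to $b_i$ ($i=1,2,3$) with no other edges; it is odd if all three $P_i$ have an odd number of edges. An even theta is a graph consisting of three internally vertex-disjoint paths with the same two endpoints, each having an even number of edges. *)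

(* Defs.v *)
From mathcomp Require Import all_boot.
Set Implicit Arguments. Unset Strict Implicit. Unset Printing Implicit Defensive.

(* theta value: 1 (strong), 0 (semi), -1 (strong anti) *)
Inductive trival := TPlus | TZero | TMinus.

Definition trival_eqb (a b : trival) : bool :=
  match a, b with
  | TPlus, TPlus | TZero, TZero | TMinus, TMinus => true | _, _ => false end.

(* A trigraph on a finite vertex type V is a map theta on ordered pairs that
   is symmetric; its values on the diagonal are irrelevant. *)
Definition is_trigraph (V : finType) (th : V -> V -> trival) : Prop :=
  forall u v, th u v = th v u.

Definition tadj (V : finType) (th : V -> V -> trival) (u v : V) : bool :=
  (u != v) && ~~ trival_eqb (th u v) TMinus.

Definition tstrong (V : finType) (th : V -> V -> trival) (u v : V) : bool :=
  (u != v) && trival_eqb (th u v) TPlus.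

Definition full_realization (V : finType) (th : V -> V -> trival) : rel V :=
  fun u v => tadj th u v.

Definition is_clique (V : finType) (th : V -> V -> trival) (K : {set V}) : Prop :=
  forall u v, u \in K -> v \in K -> u != v -> tadj th u v.

Definition is_strong_clique (V : finType) (th : V -> V -> trival) (K : {set V}) : Prop :=
  forall u v, u \in K -> v \in K -> u != v -> tstrong th u v.

Definition simple_graph (W : finType) (e : rel W) : Prop :=
  symmetric e /\ irreflexive e.

Definition bipartite (W : finType) (e : rel W) : Prop :=
  exists c : W -> bool, forall a b, e a b -> c a != c b.

Definition edge_set (W : finType) (e : rel W) : {set {set W}} :=
  [set X : {set W} | [exists a, exists b, e a b && (X == [set a; b])]].

(* The graph G on V is (isomorphic to) the line graph L(H) of H = (W, e):
   a bijection f from V onto the edge set of H such that distinct vertices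
   of V are adjacent in G iff the corresponding edges of H share an end. *)
Definition is_line_graph_of (V W : finType) (G : rel V) (e : rel W) : Prop :=
  exists f : V -> {set W},
    [/\ injective f,
        (forall v, f v \in edge_set e),
        (forall X, X \in edge_set e -> exists v, f v = X) &
        (forall u v, u != v -> (G u v <-> f u :&: f v != set0))].

Definition line_trigraph (V : finType) (th : V -> V -> trival) : Prop :=
  (exists (W : finType) (e : rel W),
      simple_graph e /\ bipartite e /\ is_line_graph_of (full_realization th) e)
  /\ (forall K : {set V}, 3 <= #|K| -> is_clique th K -> is_strong_clique th K).

Definition consec (V : eqType) (s : seq V) (x y : V) : Prop :=
  exists k, k.+1 < size s /\
    ((nth x s k = x /\ nth x s k.+1 = y) \/ (nth x s k = y /\ nth x s k.+1 = x)).

(* An odd prism in T: paths P_i = a_i :: q_i (i < 3) from a_i to b_i = last,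
   each with an odd number of edges (size q_i), pairwise vertex-disjoint,
   and the full realization of T restricted to their union has exactly the
   edges of the three paths and of the triangles {a_1,a_2,a_3},
   {b_1,b_2,b_3}. *)
Definition has_odd_prism (V : finType) (th : V -> V -> trival) : Prop :=
  exists (a : 'I_3 -> V) (q : 'I_3 -> seq V),
    let P i := a i :: q i in
    let b i := last (a i) (q i) in
    [/\ (forall i, uniq (P i)),
        (forall i, odd (size (q i))),
        (forall i j x, i != j -> x \in P i -> x \notin P j) &
        (forall x y i j, x \in P i -> y \in P j -> x != y ->
           (tadj th x y <->
              (exists k, consec (P k) x y)
              \/ (exists k l, x = a k /\ y = a l)
              \/ (exists k l, x = b k /\ y = b l)))].

(* three paths a :: s_i from a to b (b <> a), internally vertex-disjoint,
   each with an even number of edges (size s_i). *)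
Definition has_even_theta_subgraph (W : finType) (e : rel W) : Prop :=
  exists (a b : W) (s : 'I_3 -> seq W),
    [/\ a != b,
        (forall i, path e a (s i) /\ last a (s i) = b /\ uniq (a :: s i)),
        (forall i, ~~ odd (size (s i))) &
        (forall i j x, i != j -> x \in s i -> x \in s j -> x = b)].

Definition connected_in (W : finType) (e : rel W) (B : {set W}) : Prop :=
  forall x y, x \in B -> y \in B ->
    connect (fun u v => [&& e u v, u \in B & v \in B]) x y.

Definition has_K4_minor (W : finType) (e : rel W) : Prop :=
  exists B : 'I_4 -> {set W},
    [/\ (forall i, B i != set0),
        (forall i j, i != j -> [disjoint B i & B j]),
        (forall i, connected_in e (B i)) &
        (forall i j, i != j -> exists u v, [/\ u \in B i, v \in B j & e u v])].

(* Main.v *)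
Require Import Defs.
From mathcomp Require Import all_boot zify.
Set Implicit Arguments. Unset Strict Implicit. Unset Printing Implicit Defensive.

Section Gen.
Variable W : finType.
Implicit Types (e : rel W) (U : {set W}).

Definition er e U : rel W := fun u v => [&& e u v, u \in U & v \in U].

Lemma uconn (r : rel W) x y : connect r x y ->
  exists p, [/\ path r x p, last x p = y & uniq (x :: p)].
Proof.
move/connectP=> [p pp ->]; case: (shortenP pp) => p' pp' up' _.
by exists p'.
Qed.

Lemma er_mono e U U' x y : U \subset U' -> connect (er e U) x y -> connect (er e U') x y.
Proof.
move=> sUU'; apply: connect_sub => u v /and3P[h hu hv]; apply: connect1.
by rewrite /er h !(subsetP sUU').
Qed.

Lemma er_sym e U : symmetric e -> symmetric (er e U).
Proof. by move=> se u v; rewrite /er se; case: (e v u); case: (u \in U); case: (v \in U). Qed.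

Lemma er_edge e U u v : e u v -> u \in U -> v \in U -> connect (er e U) u v.
Proof. by move=> h hu hv; apply: connect1; rewrite /er h hu hv. Qed.

Lemma path_er {e U x s} : path (er e U) x s -> {subset s <= U}.
Proof.
elim: s x => //= y s IH x /andP[/and3P[_ _ yU] p] z; rewrite inE => /orP[/eqP->|] //.
exact: IH p z.
Qed.

Lemma connect_in {e U x y} : connect (er e U) x y -> x \in U -> y \in U.
Proof.
move/connectP=> [p pp ->] xU; case: p pp => [|z p] pp //.
exact: (path_er pp (mem_last z p)).
Qed.

Lemma path_col e (col : W -> bool) : (forall u v, e u v -> col u != col v) ->
  forall x s, path e x s -> col (last x s) = col x (+) odd (size s).
Proof.
move=> hc x s; elim: s x => [|y s IH] x /=; first by rewrite addbF.
move=> /andP[exy p]; rewrite IH //; move: (hc _ _ exy).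
by case: (col x); case: (col y); case: (odd (size s)).
Qed.

Lemma path_seg e U x s n m : path e x s -> n <= m -> m <= size s ->
  (forall i, n <= i <= m -> nth x (x :: s) i \in U) ->
  connect (er e U) (nth x (x :: s) n) (nth x (x :: s) m).
Proof.
move=> ps nm ms hU; elim: m nm ms hU => [|m IH] nm ms hU.
  by have -> : n = 0 by lia.
case: (ltnP n m.+1) => h; last by have -> : n = m.+1 by lia.
apply: (connect_trans (IH _ _ _)); first lia; first lia.
  by move=> i hi; apply: hU; lia.
apply: er_edge; [ | apply: hU; lia | apply: hU; lia].
by move/(pathP x): ps => /(_ m ms).
Qed.

Lemma mem_takeP (x0 : W) s j x : x \in take j s -> exists2 i, i < j /\ i < size s & x = nth x0 s i.
Proof.
move/(nthP x0)=> [i hi <-]; exists i; last by rewrite nth_take //; move: hi; rewrite size_take; case: ifP; lia.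
move: hi; rewrite size_take; case: ifP; lia.
Qed.

Lemma mem_dropP (x0 : W) s j x : x \in drop j s -> exists2 i, j <= i < size s & x = nth x0 s i.
Proof.
move/(nthP x0)=> [i hi <-]; exists (j + i); last by rewrite nth_drop.
move: hi; rewrite size_drop; lia.
Qed.

End Gen.

Section Theta.
Variable W : finType.
Variable e : rel W.

Lemma theta_of_sets (col : W -> bool) a b (S : 'I_3 -> {set W}) :
 (forall u v, e u v -> col u != col v) -> a != b -> col a = col b ->
 (forall i j x, i != j -> x \in S i -> x \in S j -> False) ->
 (forall i, a \notin S i) -> (forall i, b \notin S i) ->
 (forall i, connect (er e (a |: (b |: S i))) a b) -> has_even_theta_subgraph e.
Proof.
move=> hc ab cab dis na nb con.
have [s hs] := fin_all_exists (fun i => uconn (con i)).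
have sube : forall U, subrel (er e U) e by move=> U u v /and3P[].
exists a, b, s; split => //.
- move=> i; have [p l u] := hs i; split => //. exact: (sub_path (sube _) p).
- move=> i; have [p l u] := hs i; have := path_col hc (sub_path (sube _) p).
  by rewrite l cab; case: (odd (size (s i))); case: (col b).
- move=> i j x ij xi xj; case: (hs i) => pi _ ui; case: (hs j) => pj _ uj.
  have Ui := path_er pi xi; have Uj := path_er pj xj.
  have xa : x != a by apply/eqP => xa; move: ui; rewrite /= -xa xi.
  apply/eqP; apply/negPn/negP => xb.
  move: Ui Uj; rewrite !in_setU1 (negPf xa) (negPf xb) /= => Ui Uj.
  exact: (dis i j x ij Ui Uj).
Qed.

Definition tripod_at (B : {set W}) (c : W) (R : 'I_3 -> {set W}) (t : 'I_3 -> W) : Prop :=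
 [/\ c \in B, forall m, R m \subset B, forall m, c \notin R m,
     forall m n x, m != n -> x \in R m -> x \in R n -> False &
     forall m, connect (er e (c |: R m)) c (t m)].

Lemma tripod_perm B c R t (sg : 'I_3 -> 'I_3) : injective sg ->
  tripod_at B c R t -> tripod_at B c (fun m => R (sg m)) (fun m => t (sg m)).
Proof.
move=> isg [h1 h2 h3 h4 h5]; split => // m n x mn; apply: h4.
by apply: contra mn => /eqP /isg ->.
Qed.

End Theta.

Definition o0 : 'I_3 := @Ordinal 3 0 isT.
Definition o1 : 'I_3 := @Ordinal 3 1 isT.
Definition o2 : 'I_3 := @Ordinal 3 2 isT.

Lemma I3P (m : 'I_3) : [\/ m = o0, m = o1 | m = o2].
Proof.
case: m => [[|[|[|k]]] h].
- by constructor 1; apply: val_inj.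
- by constructor 2; apply: val_inj.
- by constructor 3; apply: val_inj.
- by [].
Qed.

Section Tripod.
Variable W : finType.
Variable e : rel W.

Lemma mem_nth_take (x0 : W) s i j : i < j -> i < size s -> nth x0 s i \in take j s.
Proof.
move=> ij hs; rewrite -(nth_take x0 ij); apply: mem_nth; rewrite size_take; case: ifP => _ //.
Qed.

Lemma mem_nth_drop (x0 : W) s i j : j <= i -> i < size s -> nth x0 s i \in drop j s.
Proof.
move=> ji hs; have -> : i = j + (i - j) by lia.
rewrite -nth_drop; apply: mem_nth; rewrite size_drop; move: (size s) hs => n hn; lia.
Qed.

Lemma nth_size_last (x : W) s : nth x (x :: s) (size s) = last x s.
Proof. by have := nth_last x (x :: s). Qed.

Lemma tripod (B : {set W}) (t : 'I_3 -> W) : symmetric e -> connected_in e B ->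
  (forall m, t m \in B) -> exists c R, tripod_at e B c R t.
Proof.
move=> se cB ht.
have [p [pp lp up]] := uconn (cB (t o0) (t o1) (ht o0) (ht o1)).
have [q [pq lq uq]] := uconn (cB (t o2) (t o0) (ht o2) (ht o0)).
have {pp}pp : path (er e B) (t o0) p := pp. have {pq}pq : path (er e B) (t o2) q := pq.
have sube : subrel (er e B) e by move=> u v /and3P[].
have ppe := sub_path sube pp; have pqe := sub_path sube pq.
set PP := t o0 :: p; set QQ := t o2 :: q.
have PB : {subset PP <= B}.
  by move=> x; rewrite inE => /orP[/eqP->|/(path_er pp)].
have QB : {subset QQ <= B}.
  by move=> x; rewrite inE => /orP[/eqP->|/(path_er pq)].
have hasQ : has (mem PP) QQ.
  apply/hasP; exists (t o0); last exact: mem_head.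
  by rewrite /QQ -lq; apply: mem_last.
set k := find (mem PP) QQ.
have kQ : k < size QQ by rewrite -has_find.
set c := nth (t o0) QQ k.
have cP : c \in PP := nth_find _ hasQ.
set j := index c PP.
have jP : j < size PP by rewrite index_mem.
have cj : nth (t o0) PP j = c := nth_index _ cP.
have notP : forall x, x \in take k QQ -> x \notin PP.
  move=> x /(mem_takeP (t o0)) [i [ik iQ] ->].
  by move: (before_find (t o0) ik) => /negbT.
pose R := fun m : 'I_3 => if (m : nat) == 0 then [set x in take j PP]
          else if (m : nat) == 1 then [set x in drop j.+1 PP] else [set x in take k QQ].
have R0 : R o0 = [set x in take j PP] by [].
have R1 : R o1 = [set x in drop j.+1 PP] by [].
have R2 : R o2 = [set x in take k QQ] by [].
have sR : forall m, R m \subset B.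
  move=> m; apply/subsetP => x; rewrite /R.
  case: ifP => _; first by rewrite inE => /mem_take /PB.
  case: ifP => _; first by rewrite inE => /mem_drop /PB.
  by rewrite inE => /mem_take /QB.
have d01 : forall x, x \in take j PP -> x \in drop j.+1 PP -> False.
  move=> x /(mem_takeP (t o0)) [i [ij iP] ->] /(mem_dropP (t o0)) [i' /andP[hi1 hi2] /eqP].
  by rewrite nth_uniq //; lia.
have dP2 : forall x, x \in PP -> x \in take k QQ -> False.
  by move=> x xP /notP; rewrite xP.
exists c, R; split.
- exact: PB.
- exact: sR.
- move=> m; case: (I3P m) => ->; rewrite ?R0 ?R1 ?R2 inE.
  + apply/negP => /(mem_takeP (t o0)) [i [ij iP] /eqP].
    by rewrite -{1}cj nth_uniq //; lia.
  + apply/negP => /(mem_dropP (t o0)) [i /andP[hi1 hi2] /eqP].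
    by rewrite -{1}cj nth_uniq //; lia.
  + by apply/negP => /notP; rewrite cP.
- move=> m n x; case: (I3P m) => ->; case: (I3P n) => -> //= _;
    rewrite ?R0 ?R1 ?R2 !inE.
  + exact: d01.
  + by move=> /mem_take h1 h2; exact: dP2 h1 h2.
  + by move=> h1 h2; exact: d01 h2 h1.
  + by move=> /mem_drop h1 h2; exact: dP2 h1 h2.
  + by move=> h2 /mem_take h1; exact: dP2 h1 h2.
  + by move=> h2 /mem_drop h1; exact: dP2 h1 h2.
- have csym : forall U, connect_sym (er e U) by move=> U; apply: sym_connect_sym; apply: er_sym.
  move=> m; case: (I3P m) => ->; rewrite ?R0 ?R1 ?R2.
  + rewrite csym -{2}cj.
    apply: (path_seg (n:=0) (m:=j) ppe) => //; try by move: jP; rewrite /PP /= ltnS.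
    move=> i hi; rewrite !inE; case: (ltnP i j) => h.
      by apply/orP; right; apply: mem_nth_take => //; exact: ltn_trans h jP.
    have ij : i = j by move: hi => /andP[? ?]; lia.
    by rewrite ij cj eqxx.
  + rewrite -lp -nth_size_last -{2}cj.
    apply: (path_seg (n:=j) (m:=size p) ppe) => //; try by move: jP; rewrite /PP /= ltnS.
    move=> i hi; rewrite !inE; case: (ltnP j i) => h.
      by apply/orP; right; apply: mem_nth_drop => //=; lia.
    have ij : i = j by move: hi => /andP[? ?]; lia.
    by rewrite ij cj eqxx.
  + have c2 : c = nth (t o2) QQ k by rewrite /c (set_nth_default (t o2)).
    rewrite csym [X in connect _ _ X]c2.
    apply: (path_seg (n:=0) (m:=k) pqe) => //; try by move: kQ; rewrite /QQ /= ltnS.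
    move=> i hi; rewrite !inE; case: (ltnP i k) => h.
      by apply/orP; right; apply: mem_nth_take => //; exact: ltn_trans h kQ.
    have ij : i = k by move: hi => /andP[? ?]; lia.
    by rewrite ij -c2 eqxx.
Qed.

End Tripod.

Section Assemble.
Variable W : finType.
Variable e : rel W.

Ltac subs := apply/subsetP => x; rewrite !inE; repeat (case/orP => ->; rewrite ?orbT //); move=> ->; rewrite ?orbT.

Lemma route (se : symmetric e) (a b : W) (A M C : {set W}) (u u' v' v : W) :
  connect (er e (a |: A)) a u -> e u u' -> u' \in M -> connect (er e M) u' v' -> e v' v ->
  connect (er e (b |: C)) b v -> connect (er e (a |: (b |: (A :|: M :|: C)))) a b.
Proof.
move=> c1 e1 hu' c2 e2 c3.
have csym : forall U, connect_sym (er e U) by move=> U; apply: sym_connect_sym; apply: er_sym.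
have s1 : a |: A \subset a |: (b |: (A :|: M :|: C)) by subs.
have s2 : M \subset a |: (b |: (A :|: M :|: C)) by subs.
have s3 : b |: C \subset a |: (b |: (A :|: M :|: C)) by subs.
have hu : u \in a |: A by apply: (connect_in c1); rewrite setU11.
have hv' : v' \in M by apply: (connect_in c2).
have hv : v \in b |: C by apply: (connect_in c3); rewrite setU11.
apply: (connect_trans (er_mono s1 c1)).
apply: (connect_trans (er_edge e1 (subsetP s1 _ hu) (subsetP s2 _ hu'))).
apply: (connect_trans (er_mono s2 c2)).
apply: (connect_trans (er_edge e2 (subsetP s2 _ hv') (subsetP s3 _ hv))).
by rewrite csym; apply: (er_mono s3 c3).
Qed.

Lemma route0 (se : symmetric e) (a b : W) (A C : {set W}) (u v : W) :
  connect (er e (a |: A)) a u -> e u v ->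
  connect (er e (b |: C)) b v -> connect (er e (a |: (b |: (A :|: set0 :|: C)))) a b.
Proof.
move=> c1 e1 c3.
have csym : forall U, connect_sym (er e U) by move=> U; apply: sym_connect_sym; apply: er_sym.
have s1 : a |: A \subset a |: (b |: (A :|: set0 :|: C)) by subs.
have s3 : b |: C \subset a |: (b |: (A :|: set0 :|: C)) by subs.
have hu : u \in a |: A by apply: (connect_in c1); rewrite setU11.
have hv : v \in b |: C by apply: (connect_in c3); rewrite setU11.
apply: (connect_trans (er_mono s1 c1)).
apply: (connect_trans (er_edge e1 (subsetP s1 _ hu) (subsetP s3 _ hv))).
by rewrite csym; apply: (er_mono s3 c3).
Qed.

End Assemble.

Section Assemble2.
Variable W : finType.
Variable e : rel W.

Lemma assemble (se : symmetric e) (col : W -> bool) (B : 'I_4 -> {set W}) (i j k l : 'I_4)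
  (ci cj : W) (Ri Rj : 'I_3 -> {set W}) (ti tj : 'I_3 -> W) (u1 v1 u2 v2 : W) :
 (forall u v, e u v -> col u != col v) ->
 (forall p q x, p != q -> x \in B p -> x \in B q -> False) ->
 i != j -> i != k -> i != l -> j != k -> j != l -> k != l ->
 connected_in e (B k) -> connected_in e (B l) ->
 tripod_at e (B i) ci Ri ti -> tripod_at e (B j) cj Rj tj -> col ci = col cj ->
 e (ti o0) (tj o0) ->
 u1 \in B k -> v1 \in B k -> e (ti o1) u1 -> e v1 (tj o1) ->
 u2 \in B l -> v2 \in B l -> e (ti o2) u2 -> e v2 (tj o2) ->
 has_even_theta_subgraph e.
Proof.
move=> hc hB ij ik il jk jl kl ck cl [ciB sRi nci dRi cRi] [cjB sRj ncj dRj cRj] ccol e0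
  u1k v1k e1 e1' u2l v2l e2 e2'.
pose M := fun m : 'I_3 => if (m:nat) == 0 then set0 else if (m:nat) == 1 then B k else B l.
have M0 : M o0 = set0 by [].
have M1 : M o1 = B k by [].
have M2 : M o2 = B l by [].
have ji : j != i by rewrite eq_sym.
have ki : k != i by rewrite eq_sym.
have li : l != i by rewrite eq_sym.
have kj : k != j by rewrite eq_sym.
have lj : l != j by rewrite eq_sym.
have lk : l != k by rewrite eq_sym.
have hMi : forall m x, x \in M m -> x \in B i -> False.
  move=> m x; case: (I3P m) => ->; rewrite ?M0 ?M1 ?M2 ?inE //.
  - exact: hB.
  - exact: hB.
have hMj : forall m x, x \in M m -> x \in B j -> False.
  move=> m x; case: (I3P m) => ->; rewrite ?M0 ?M1 ?M2 ?inE //.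
  - exact: hB.
  - exact: hB.
have hMM : forall m n x, m != n -> x \in M m -> x \in M n -> False.
  move=> m n x; case: (I3P m) => ->; case: (I3P n) => -> //= _; rewrite ?M0 ?M1 ?M2 ?inE //.
  - exact: hB.
  - exact: hB.
have xi : forall m x, x \in Ri m -> x \in B i by move=> m x; apply: (subsetP (sRi m)).
have xj : forall m x, x \in Rj m -> x \in B j by move=> m x; apply: (subsetP (sRj m)).
apply: (@theta_of_sets _ _ col ci cj (fun m => Ri m :|: M m :|: Rj m)).
- exact: hc.
- by apply/eqP => h; apply: (hB i j ci ij ciB); rewrite h.
- exact: ccol.
- move=> m n x mn; rewrite !inE.
  case/orP => [/orP[h|h]|h]; case/orP => [/orP[h'|h']|h'].
  + exact: (dRi m n x mn h h').
  + exact: (hMi n x h' (xi _ _ h)).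
  + exact: (hB i j x ij (xi _ _ h) (xj _ _ h')).
  + exact: (hMi m x h (xi _ _ h')).
  + exact: (hMM m n x mn h h').
  + exact: (hMj m x h (xj _ _ h')).
  + exact: (hB j i x ji (xj _ _ h) (xi _ _ h')).
  + exact: (hMj n x h' (xj _ _ h)).
  + exact: (dRj m n x mn h h').
- move=> m; rewrite !inE (negPf (nci m)) /=; apply/negP => /orP[h|h].
  + exact: (hMi m ci h ciB).
  + exact: (hB i j ci ij ciB (xj _ _ h)).
- move=> m; rewrite !inE (negPf (ncj m)) orbF; apply/negP => /orP[h|h].
  + exact: (hB i j cj ij (xi _ _ h) cjB).
  + exact: (hMj m cj h cjB).
- move=> m; case: (I3P m) => ->; rewrite ?M0 ?M1 ?M2.
  + exact: (route0 se (cRi o0) e0 (cRj o0)).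
  + exact: (route se (cRi o1) e1 u1k (ck u1 v1 u1k v1k) e1' (cRj o1)).
  + exact: (route se (cRi o2) e2 u2l (cl u2 v2 u2l v2l) e2' (cRj o2)).
Qed.

End Assemble2.

Definition q0 : 'I_4 := @Ordinal 4 0 isT.
Definition q1 : 'I_4 := @Ordinal 4 1 isT.
Definition q2 : 'I_4 := @Ordinal 4 2 isT.
Definition q3 : 'I_4 := @Ordinal 4 3 isT.
Definition sw3 (m : 'I_3) : 'I_3 := if (m : nat) == 0 then o1 else if (m : nat) == 1 then o0 else o2.
Lemma sw3_inj : injective sw3.
Proof. by move=> m n; case: (I3P m) => ->; case: (I3P n) => ->. Qed.

Section K4.
Variable W : finType.
Variable e : rel W.

Definition mk3 (a b c : W) : 'I_3 -> W :=
  fun m => if (m : nat) == 0 then a else if (m : nat) == 1 then b else c.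

Lemma mk3_in (S : {set W}) a b c : a \in S -> b \in S -> c \in S -> forall m, mk3 a b c m \in S.
Proof. by move=> ha hb hc m; case: (I3P m) => ->. Qed.

Lemma k4_theta (se : symmetric e) (col : W -> bool) :
  (forall u v, e u v -> col u != col v) -> has_K4_minor e -> has_even_theta_subgraph e.
Proof.
move=> hc [B [ne dis conn adj]].
have hB : forall p q x, p != q -> x \in B p -> x \in B q -> False.
  by move=> p q x pq hp hq; move: (disjointFr (dis p q pq) hp); rewrite hq.
have [x01 [x10 [h01 h10 e01]]] := adj q0 q1 isT.
have [x02 [x20 [h02 h20 e02]]] := adj q0 q2 isT.
have [x03 [x30 [h03 h30 e03]]] := adj q0 q3 isT.
have [x12 [x21 [h12 h21 e12]]] := adj q1 q2 isT.
have [x13 [x31 [h13 h31 e13]]] := adj q1 q3 isT.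
have [x23 [x32 [h23 h32 e23]]] := adj q2 q3 isT.
have [c0 [R0 T0]] := tripod se (conn q0) (mk3_in h01 h02 h03).
have [c1 [R1 T1]] := tripod se (conn q1) (mk3_in h10 h12 h13).
have [c2 [R2 T2]] := tripod se (conn q2) (mk3_in h20 h21 h23).
have c0B : c0 \in B q0 by case: T0.
have c1B : c1 \in B q1 by case: T1.
have c2B : c2 \in B q2 by case: T2.
case E01: (col c0 == col c1).
  apply: (assemble se hc hB _ _ _ _ _ _ (conn q2) (conn q3) T0 T1 (eqP E01)
     (u1 := x20) (v1 := x21) (u2 := x30) (v2 := x31)) => //=.
  - by rewrite se.
  - by rewrite se.
case E02: (col c0 == col c2).
  apply: (assemble se hc hB _ _ _ _ _ _ (conn q1) (conn q3) (tripod_perm sw3_inj T0) T2 (eqP E02)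
     (u1 := x10) (v1 := x12) (u2 := x30) (v2 := x32)) => //=.
  by rewrite se.
have E12 : col c1 = col c2 by move: E01 E02; case: (col c0); case: (col c1); case: (col c2).
apply: (assemble se hc hB _ _ _ _ _ _ (conn q0) (conn q3) (tripod_perm sw3_inj T1)
   (tripod_perm sw3_inj T2) E12 (u1 := x01) (v1 := x02) (u2 := x31) (v2 := x32)) => //=.
- by rewrite se.
- by rewrite se.
Qed.

End K4.

Lemma last_iota m n : last m (iota m.+1 n) = m + n.
Proof. elim: n m => [|n IH] m /=; first by rewrite addn0. by rewrite IH addSnnS. Qed.

Lemma nth_idx (T : eqType) (s : seq T) x0 i j : uniq s -> i < size s -> j < size s ->
  nth x0 s i = nth x0 s j -> i = j.
Proof. by move=> u hi hj /eqP; rewrite nth_uniq // => /eqP. Qed.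

Section Prism.
Variables (V W : finType) (th : V -> V -> trival) (e : rel W).
Variable f : V -> {set W}.
Hypothesis finj : injective f.
Hypothesis fE : forall v, f v \in edge_set e.
Hypothesis fsurj : forall X, X \in edge_set e -> exists v, f v = X.
Hypothesis fadj : forall u v, u != v -> (full_realization th u v <-> f u :&: f v != set0).
Variables (a b : W) (s : 'I_3 -> seq W).
Hypothesis ab : a != b.
Hypothesis hs : forall i, path e a (s i) /\ last a (s i) = b /\ uniq (a :: s i).
Hypothesis hev : forall i, ~~ odd (size (s i)).
Hypothesis hint : forall i j x, i != j -> x \in s i -> x \in s j -> x = b.

Definition pp i := a :: s i.
Definition NN i := size (s i).
Definition EE i m := [set nth a (pp i) m; nth a (pp i) m.+1].

Lemma hN i : 1 < NN i.
Proof.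
have [_ [l _]] := hs i; move: (hev i) l; rewrite /NN.
case: (s i) => [|x [|y t]] //=; first by move=> _ h; move: ab; rewrite h eqxx.
Qed.

Lemma upp i : uniq (pp i).
Proof. by have [_ [_ u]] := hs i. Qed.

Lemma nth_b i : nth a (pp i) (NN i) = b.
Proof. by have [_ [l _]] := hs i; rewrite /pp /NN nth_size_last. Qed.

Lemma idx_a {i m} : m <= NN i -> nth a (pp i) m = a -> m = 0.
Proof.
move=> hm h; apply: (@nth_idx _ (pp i) a) => //; first exact: upp.
Qed.

Lemma idx_b {i m} : m <= NN i -> nth a (pp i) m = b -> m = NN i.
Proof.
move=> hm h; apply: (@nth_idx _ (pp i) a) => //; first exact: upp.
by rewrite nth_b.
Qed.

Lemma idx_eq {i m m'} : m <= NN i -> m' <= NN i -> nth a (pp i) m = nth a (pp i) m' -> m = m'.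
Proof. by move=> hm hm' h; apply: (@nth_idx _ (pp i) a) => //; exact: upp. Qed.

Lemma common {i j x} : i != j -> x \in pp i -> x \in pp j -> x = a \/ x = b.
Proof.
move=> ij; rewrite !inE => /orP[/eqP->|hi]; first by left.
move=> /orP[/eqP->|hj]; first by left.
by right; apply: hint hi hj.
Qed.

Lemma EE_edge i m : m < NN i -> EE i m \in edge_set e.
Proof.
move=> hm; have [p _] := hs i.
rewrite inE; apply/existsP; exists (nth a (pp i) m); apply/existsP; exists (nth a (pp i) m.+1).
by rewrite (pathP a p m hm) eqxx.
Qed.

Lemma EE_mem {i m x} : x \in EE i m -> x = nth a (pp i) m \/ x = nth a (pp i) m.+1.
Proof. by move/set2P. Qed.

Lemma EE_inj i j m m' : m < NN i -> m' < NN j -> EE i m = EE j m' -> i = j /\ m = m'.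
Proof.
move=> hm hm' E.
have h1 : nth a (pp i) m \in EE j m' by rewrite -E set21.
have h2 : nth a (pp i) m.+1 \in EE j m' by rewrite -E set22.
case: (eqVneq i j) => [ij|ij].
  subst j; split => //.
  case/EE_mem: h1 => /idx_eq h1; case/EE_mem: h2 => /idx_eq h2.
  - by apply: h1; lia.
  - by apply: h1; lia.
  - have := h2 ltac:(lia) ltac:(lia); lia.
  - by have := h1 ltac:(lia) ltac:(lia); lia.
exfalso.
have mem_pp : forall k n, n <= NN k -> nth a (pp k) n \in pp k.
  by move=> k n hn; apply: mem_nth; rewrite /pp /= ltnS.
have inj' : forall x, x \in EE j m' -> x \in pp j.
  by move=> x /EE_mem [->|->]; apply: mem_pp; lia.
have n2 := hN i.
case: (common ij (mem_pp i m ltac:(lia)) (inj' _ h1)) => [ha|hb].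
  have m0 : m = 0 by apply: (idx_a _ ha); lia.
  subst m.
  case: (common ij (mem_pp i 1 ltac:(lia)) (inj' _ h2)) => [ha'|hb'].
    have : 1 = 0 by apply: (idx_a _ ha'); lia.
    by [].
  have : 1 = NN i by apply: (idx_b _ hb'); lia.
  lia.
have : m = NN i by apply: (idx_b _ hb); lia.
lia.
Qed.


Lemma prism_of_theta : has_odd_prism th.
Proof.
have n0 := hN o0.
have [v0 _] : exists v0 : V, True.
  by have [v _] := fsurj (@EE_edge o0 0 ltac:(lia)); exists v.
pose g X := odflt v0 [pick v | f v == X].
have gK : forall X, X \in edge_set e -> f (g X) = X.
  move=> X hX; rewrite /g; case: pickP => [v /eqP //|hn].
  by have [v hv] := fsurj hX; move: (hn v); rewrite hv eqxx.
pose h i m := g (EE i m).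
have fh : forall i m, m < NN i -> f (h i m) = EE i m.
  by move=> i m hm; apply: gK; apply: EE_edge.
have hinj : forall i j m m', m < NN i -> m' < NN j -> h i m = h j m' -> i = j /\ m = m'.
  move=> i j m m' hm hm' E; apply: EE_inj => //.
  by rewrite -(fh i m hm) -(fh j m' hm') E.
pose a' := fun i => h i 0.
pose q' := fun i => map (h i) (iota 1 (NN i).-1).
have Peq : forall i, a' i :: q' i = map (h i) (iota 0 (NN i)).
  by move=> i; have := hN i; rewrite /a' /q'; case: (NN i) => [|n] //= _.
have bq : forall i, last (a' i) (q' i) = h i (NN i).-1.
  by move=> i; rewrite /a' /q' last_map last_iota.
have memP : forall i x, x \in a' i :: q' i -> exists2 m, m < NN i & x = h i m.
  move=> i x; rewrite Peq => /mapP [m]; rewrite mem_iota add0n => /andP[_ hm] ->.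
  by exists m.
have nthP' : forall i n (x0 : V), n < NN i -> nth x0 (a' i :: q' i) n = h i n.
  by move=> i n x0 hn; rewrite Peq (nth_map 0) ?size_iota // nth_iota.
have sizeP : forall i, size (a' i :: q' i) = NN i by move=> i; rewrite Peq size_map size_iota.
have cons_ok : forall i n, n.+1 < NN i ->
    consec (a' i :: q' i) (h i n) (h i n.+1) /\ consec (a' i :: q' i) (h i n.+1) (h i n).
  move=> i n hn; split; exists n; rewrite sizeP; split => //.
  - by left; rewrite !nthP' //; lia.
  - by right; rewrite !nthP' //; lia.
exists a', q'; cbv beta zeta; split.
- move=> i; rewrite Peq map_inj_in_uniq ?iota_uniq // => m m'.
  rewrite !mem_iota !add0n => /andP[_ hm] /andP[_ hm'] E.
  by have [_ ->] := hinj i i m m' hm hm' E.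
- move=> i; rewrite size_map size_iota; move: (hN i) (hev i); rewrite /NN.
  by case: (size (s i)) => [|n] //= _; rewrite negbK.
- move=> i j x ij /memP [m hm ->]; apply/negP => /memP [m' hm' E].
  have [ij' _] := hinj i j m m' hm hm' E.
  by move: ij; rewrite ij' eqxx.
- move=> x y i j /memP [m hm ->] /memP [m' hm' ->] xy.
  have H : tadj th (h i m) (h j m') <-> f (h i m) :&: f (h j m') != set0 := fadj xy.
  split.
  + move/H; rewrite (fh i m hm) (fh j m' hm') => /set0Pn [v]; rewrite inE => /andP[v1 v2].
    case: (eqVneq i j) => [ij|ij].
    * subst j; have mm : m != m' by apply: contra xy => /eqP ->.
      left; exists i.
      case/EE_mem: v1 => hv1; case/EE_mem: v2 => hv2; rewrite hv1 in hv2;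
        move/idx_eq: hv2 => E.
      - have mm' : m = m' by apply: E; lia.
        by rewrite mm' eqxx in mm.
      - have -> : m = m'.+1 by apply: E; lia.
        by case: (cons_ok i m' ltac:(lia)).
      - have -> : m' = m.+1 by symmetry; apply: E; lia.
        by case: (cons_ok i m ltac:(lia)).
      - have mm' : m.+1 = m'.+1 by apply: E; lia.
        by case: mm' mm => ->; rewrite eqxx.
    * have mem_pp : forall k n, n <= NN k -> nth a (pp k) n \in pp k.
        by move=> k n hn; apply: mem_nth; rewrite /pp /= ltnS.
      have vi : v \in pp i by case/EE_mem: v1 => ->; apply: mem_pp; lia.
      have vj : v \in pp j by case/EE_mem: v2 => ->; apply: mem_pp; lia.
      case: (common ij vi vj) => [va|vb]; right.
      - left; exists i, j.
        have m0 : m = 0.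
          case/EE_mem: v1 => hv; rewrite hv in va.
            by apply: (idx_a _ va); lia.
          have : m.+1 = 0 by apply: (idx_a _ va); lia.
          by [].
        have m0' : m' = 0.
          case/EE_mem: v2 => hv; rewrite hv in va.
            by apply: (idx_a _ va); lia.
          have : m'.+1 = 0 by apply: (idx_a _ va); lia.
          by [].
        by rewrite m0 m0'.
      - right; exists i, j; rewrite !bq.
        have m0 : m = (NN i).-1.
          case/EE_mem: v1 => hv; rewrite hv in vb.
            have : m = NN i by apply: (idx_b _ vb); lia.
            lia.
          have : m.+1 = NN i by apply: (idx_b _ vb); lia.
          lia.
        have m0' : m' = (NN j).-1.
          case/EE_mem: v2 => hv; rewrite hv in vb.
            have : m' = NN j by apply: (idx_b _ vb); lia.
            lia.
          have : m'.+1 = NN j by apply: (idx_b _ vb); lia.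
          lia.
        by rewrite m0 m0'.
  + move=> hr; apply/H; apply/set0Pn.
    case: hr => [[k [n [hn [[e1 e2]|[e1 e2]]]]]|[[k [l [hx hy]]]|[k [l [hx hy]]]]].
    * move: hn e1 e2; rewrite sizeP => hn; rewrite !nthP' //; try lia.
      move=> <- <-; rewrite !fh //; try lia.
      by exists (nth a (pp k) n.+1); rewrite inE set22 set21.
    * move: hn e1 e2; rewrite sizeP => hn; rewrite !nthP' //; try lia.
      move=> <- <-; rewrite !fh //; try lia.
      by exists (nth a (pp k) n.+1); rewrite inE set22 set21.
    * have := hN k; have := hN l => hl hk.
      rewrite hx hy /a' !fh //; try lia.
      by exists a; rewrite inE set21 set21.
    * have := hN k; have := hN l => hl hk.
      rewrite hx hy !bq !fh //; try lia.
      exists b; rewrite inE /EE !prednK; try lia.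
      by rewrite !nth_b set22 set22.
Qed.

End Prism.

Theorem proposition4p4 (V : finType) (th : V -> V -> trival)
  (W : finType) (e : rel W) :
  is_trigraph th -> line_trigraph th -> ~ has_odd_prism th ->
  simple_graph e -> bipartite e ->
  is_line_graph_of (full_realization th) e ->
  ~ has_even_theta_subgraph e /\ ~ has_K4_minor e.
Proof.
move=> _ _ nP [se _] [col hc] [f [finj fE fsurj fadj]].
have T : ~ has_even_theta_subgraph e.
  move=> [a [b [s [ab hs hev hint]]]]; apply: nP.
  exact: (prism_of_theta fsurj fadj ab hs hev hint).
split => // K; apply: T; exact: (k4_theta se hc K).
Qed.
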